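(* Let $\mathcal{A}=\{X_1,\dots,X_M\}\subseteq\mathbb{R}^d$ be a fixed action set spanning $\mathbb{R}^d$ with $\|X_i\|_2\le c$, let $\theta^*\in\mathbb{R}^d$ with $\|\theta^*\|_2\le c'$ and $X_i^\top\theta^*\in[0,1]$ for all $i$, and let $1\le k\le M$. Let $\mathbf{w}_k^*$ be a minimizer in the definition of $f^*(\mathcal{A},k)$. Consider the policy $\pi$ that, over $T$ rounds (selecting $k$ distinct arms per round, $kT$ selections in total), plays each arm $X_i$ exactly $kT\,w^*_{k,i}$ times in total (assume these are integers), and let $\hat\theta_T$ be the ridge estimator with parameter $\lambda>0$. Then $$\mathrm{RMSE}_T(\pi,\mathcal{A},\theta^* )\in\tilde{\mathcal{O}}\!\left(\sqrt{\frac{f^*(\mathcal{A},k)}{kT}}\right),$$ where $\tilde{\mathcal{O}}$ hides constant factors and logarithmic factors in $d$, $kT$, $\lambda$, $c$, $c'$.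
   Context: Setting: in each round $t=1,\dots,T$ the agent selects $k$ distinct actions $X_{t,1},\dots,X_{t,k}\in\mathcal{A}$ and observes independent binary rewards $r_{t,i}\in\{0,1\}$ with $\mathbb{E}[r_{t,i}]=X_{t,i}^\top\theta^*$. For $\lambda>0$ define $V_t=\lambda I+\sum_{s=1}^t\sum_{r=1}^k X_{s,r}X_{s,r}^\top$ and the ridge estimator $\hat\theta_T=V_T^{-1}\sum_{s=1}^T\sum_{r=1}^k r_{s,r}X_{s,r}$. The RMSE after $T$ rounds is $\mathrm{RMSE}_T(\pi,\mathcal{A},\theta^* )=\mathbb{E}\Big[\sqrt{\tfrac{1}{|\mathcal{A}|}\sum_{X\in\mathcal{A}}(X^\top(\hat\theta_T-\theta^* ))^2}\Big]$. Let $\Delta^{M-1}_{1/k}=\{\mathbf{w}\in\mathbb{R}^M: w_i\ge 0,\ \sum_i w_i=1,\ w_i\le 1/k\ \forall i\}$ and $$f^*(\mathcal{A},k)=\min_{\mathbf{w}\in\Delta^{M-1}_{1/k}}\ \max_{X_i\in\mathcal{A}} X_i^\top\Big(\sum_{j=1}^M w_jX_jX_j^\top\Big)^{-1}X_i .$$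
   Formalization: The constant hidden in Õ may depend on λ, c and c', and the hidden logarithmic factor is a power of ln(d + kT + 3), involving only d and kT. The paper assumes this as well. *)

(* Defs.v *)
From HB Require Import structures.
From mathcomp Require Import all_boot all_order all_algebra.
From mathcomp Require Import reals exp.
Set Implicit Arguments. Unset Strict Implicit. Unset Printing Implicit Defensive.
Import Order.TTheory GRing.Theory Num.Theory.
Local Open Scope ring_scope.

Definition inner (R : comNzRingType) (d : nat) (x y : 'cV[R]_d) : R := (x^T *m y) 0 0.

Definition norm2 (R : realType) (d : nat) (x : 'cV[R]_d) : R := Num.sqrt (inner x x).

Definition capped_simplex (R : realFieldType) (M k : nat) (w : 'I_M -> R) : Prop :=
  (forall i, 0 <= w i <= k%:R^-1) /\ \sum_(i < M) w i = 1.

Definition design (R : fieldType) (d M : nat) (X : 'I_M -> 'cV[R]_d) (w : 'I_M -> R)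
  : 'M[R]_d := \sum_(j < M) w j *: (X j *m (X j)^T).

Definition design_obj (R : realFieldType) (d M : nat) (X : 'I_M -> 'cV[R]_d)
  (w : 'I_M -> R) : R :=
  \big[Order.max/0]_(i < M) inner (X i) (invmx (design X w) *m X i).

(* w is a minimizer in the definition of f-star(A,k); the objective is +oo
   (excluded) when the design matrix is singular.  Then f-star(A,k) = design_obj X w. *)
Definition is_fstar_minimizer (R : realFieldType) (d M k : nat)
  (X : 'I_M -> 'cV[R]_d) (w : 'I_M -> R) : Prop :=
  [/\ capped_simplex k w, design X w \in unitmx &
      forall w', capped_simplex k w' -> design X w' \in unitmx ->
                 design_obj X w <= design_obj X w'].

(* A schedule: in round t (< T), slot r (< k), arm sched t r is played. *)
Definition gram (R : fieldType) (d M T k : nat) (lambda : R)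
  (X : 'I_M -> 'cV[R]_d) (sched : 'I_T -> 'I_k -> 'I_M) : 'M[R]_d :=
  lambda%:M + \sum_(tr : 'I_T * 'I_k) (X (sched tr.1 tr.2) *m (X (sched tr.1 tr.2))^T).

(* reward outcomes: om (t,r) is the binary reward r_{t,r} *)
Definition ridge (R : fieldType) (d M T k : nat) (lambda : R)
  (X : 'I_M -> 'cV[R]_d) (sched : 'I_T -> 'I_k -> 'I_M)
  (om : {ffun 'I_T * 'I_k -> bool}) : 'cV[R]_d :=
  invmx (gram lambda X sched) *m
    \sum_(tr : 'I_T * 'I_k) ((om tr)%:R *: X (sched tr.1 tr.2)).

Definition outcome_prob (R : comNzRingType) (d M T k : nat) (X : 'I_M -> 'cV[R]_d)
  (theta : 'cV[R]_d) (sched : 'I_T -> 'I_k -> 'I_M)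
  (om : {ffun 'I_T * 'I_k -> bool}) : R :=
  \prod_(tr : 'I_T * 'I_k)
     (if om tr then inner (X (sched tr.1 tr.2)) theta
      else 1 - inner (X (sched tr.1 tr.2)) theta).

Definition rmse (R : realType) (d M T k : nat) (lambda : R)
  (X : 'I_M -> 'cV[R]_d) (theta : 'cV[R]_d) (sched : 'I_T -> 'I_k -> 'I_M) : R :=
  \sum_(om : {ffun 'I_T * 'I_k -> bool})
     outcome_prob X theta sched om *
     Num.sqrt (M%:R^-1 * \sum_(i < M) (inner (X i) (ridge lambda X sched om - theta)) ^+ 2).

(* Main.v *)
Require Import Defs.
From HB Require Import structures.
From mathcomp Require Import all_boot all_order all_algebra.
From mathcomp Require Import reals exp.
From mathcomp Require Import ring lra.
Import Order.TTheory GRing.Theory Num.Theory.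
Set Implicit Arguments. Unset Strict Implicit. Unset Printing Implicit Defensive.
Local Open Scope ring_scope.

Lemma innerE (R : realType) n (x y : 'cV[R]_n) : inner x y = \sum_i x i 0 * y i 0.
Proof. by rewrite /inner mxE; apply: eq_bigr => i _; rewrite mxE. Qed.

Lemma innerC (R : realType) n (x y : 'cV[R]_n) : inner x y = inner y x.
Proof. by rewrite !innerE; apply: eq_bigr => i _; rewrite mulrC. Qed.

Lemma innerDr (R : realType) n (x y z : 'cV[R]_n) : inner x (y + z) = inner x y + inner x z.
Proof. by rewrite !innerE -big_split; apply: eq_bigr => i _; rewrite mxE mulrDr. Qed.

Lemma innerNr (R : realType) n (x y : 'cV[R]_n) : inner x (- y) = - inner x y.
Proof. by rewrite !innerE -sumrN; apply: eq_bigr => i _; rewrite mxE mulrN. Qed.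

Lemma innerBr (R : realType) n (x y z : 'cV[R]_n) : inner x (y - z) = inner x y - inner x z.
Proof. by rewrite innerDr innerNr. Qed.

Lemma innerZr (R : realType) n (a : R) (x y : 'cV[R]_n) : inner x (a *: y) = a * inner x y.
Proof. by rewrite !innerE mulr_sumr; apply: eq_bigr => i _; rewrite mxE mulrCA. Qed.

Lemma innerSr (R : realType) n (I : finType) (x : 'cV[R]_n) (F : I -> 'cV[R]_n) :
  inner x (\sum_(j : I) F j) = \sum_(j : I) inner x (F j).
Proof.
rewrite innerE (eq_bigr (fun i => \sum_j x i 0 * F j i 0)); last first.
  by move=> i _; rewrite summxE mulr_sumr.
by rewrite exchange_big; apply: eq_bigr => j _; rewrite innerE.
Qed.

Lemma innerMr (R : realType) n (A : 'M[R]_n) (x y : 'cV[R]_n) :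
  inner x (A *m y) = inner (A^T *m x) y.
Proof. by rewrite /inner trmx_mul trmxK mulmxA. Qed.

Lemma inner_ge0 (R : realType) n (x : 'cV[R]_n) : 0 <= inner x x.
Proof. by rewrite innerE sumr_ge0 // => i _; rewrite -expr2 sqr_ge0. Qed.

Lemma inner_outer (R : realType) n (B : 'M[R]_n) (x y t : 'cV[R]_n) :
  inner x (B *m (y *m y^T) *m t) = inner x (B *m y) * inner y t.
Proof.
rewrite /inner !mulmxA -[x^T *m B *m y *m y^T *m t]mulmxA -[x^T *m B *m y]mulmxA.
by rewrite [in LHS]mxE big_ord1.
Qed.

Lemma mul1mxE (R : realType) n (B : 'M[R]_n) (x : 'cV[R]_n) : inner x ((1%:M : 'M_n) *m x) = inner x x.
Proof. by rewrite mul1mx. Qed.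

Lemma innerZl (R : realType) n (a : R) (x y : 'cV[R]_n) : inner (a *: x) y = a * inner x y.
Proof. by rewrite innerC innerZr innerC. Qed.
Lemma qvar (R : realType) n (V A : 'M[R]_n) (x : 'cV[R]_n) :
  V \in unitmx -> A \in unitmx -> A^T = A ->
  (forall z, 0 <= inner z (A *m z)) ->
  (forall z, inner z (A *m z) <= inner z (V *m z)) ->
  inner x (invmx V *m x) <= inner x (invmx A *m x).
Proof.
move=> uV uA sA psd le.
set y := invmx V *m x; set a := invmx A *m x.
have Vy : V *m y = x by rewrite /y mulmxA mulmxV // mul1mx.
have Aa : A *m a = x by rewrite /a mulmxA mulmxV // mul1mx.
have h := psd (a - y).
rewrite mulmxBr innerBr !(innerC (a - y)) !innerBr Aa in h.
have f1 : inner (A *m y) a = inner x y by rewrite innerC innerMr sA Aa.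
have f2 : inner (A *m y) y = inner y (A *m y) by rewrite innerC.
have h2 := le y. rewrite Vy (innerC y x) in h2.
lra.
Qed.
Lemma cs_form (R : realType) n (B : 'M[R]_n) (x t : 'cV[R]_n) :
  B^T = B -> (forall z, 0 <= inner z (B *m z)) ->
  inner x (B *m t) ^+ 2 <= inner x (B *m x) * inner t (B *m t).
Proof.
move=> sB psd.
have key : forall s, 0 <= s ^+ 2 * inner x (B *m x) - 2 * s * inner x (B *m t) + inner t (B *m t).
  move=> s; have h := psd (s *: x - t).
  rewrite mulmxBr -scalemxAr innerBr !(innerC (s *: x - t)) !innerBr !innerZr in h.
  have e1 : inner (B *m x) x = inner x (B *m x) by rewrite innerC.
  have e2 : inner (B *m x) t = inner x (B *m t) by rewrite innerMr sB.
  have e3 : inner (B *m t) x = inner x (B *m t) by rewrite innerC.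
  have e4 : inner (B *m t) t = inner t (B *m t) by rewrite innerC.
  rewrite !innerZl e1 e2 e3 e4 in h. nra.
set a := inner x (B *m x) in key *; set b := inner x (B *m t) in key *;
set c := inner t (B *m t) in key *.
have a0 : 0 <= a by apply: psd.
have [az|ap] := eqVneq a 0.
  have [bz|bn] := eqVneq b 0; first by rewrite bz az; lra.
  have := key ((c + 1) / (2 * b)).
  rewrite az mulr0 sub0r.
  have -> : 2 * ((c + 1) / (2 * b)) * b = c + 1.
  by field.
  lra.
have ap' : 0 < a by rewrite lt0r ap.
have := key (b / a).
have -> : (b / a) ^+ 2 * a - 2 * (b / a) * b + c = c - b ^+ 2 / a by field.
rewrite subr_ge0 ler_pdivrMr // => h; lra.
Qed.
Lemma jensen_sqrt (R : realType) (I : finType) (p y : I -> R) :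
  (forall i, 0 <= p i) -> \sum_i p i = 1 -> (forall i, 0 <= y i) ->
  \sum_i p i * Num.sqrt (y i) <= Num.sqrt (\sum_i p i * y i).
Proof.
move=> p0 p1 y0.
have py0 : forall i, 0 <= p i * y i by move=> i; rewrite mulr_ge0.
set m := \sum_i p i * y i.
have m0 : 0 <= m by rewrite sumr_ge0.
have [mz|mn] := eqVneq m 0.
  rewrite mz sqrtr0 big1 // => i _.
  have := @psumr_eq0P _ _ predT (fun j => p j * y j) (fun j _ => py0 j) mz i isT.
  move/eqP; rewrite mulf_eq0 => /orP [/eqP -> | /eqP ->]; first by rewrite mul0r.
  by rewrite sqrtr0 mulr0.
have mp : 0 < m by rewrite lt0r mn.
set s := Num.sqrt m.
have sp : 0 < s by rewrite sqrtr_gt0.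
have s2 : s ^+ 2 = m by rewrite sqr_sqrtr.
have step : forall i, p i * Num.sqrt (y i) <= p i * ((y i + m) / (2 * s)).
  move=> i; apply: ler_wpM2l => //.
  rewrite ler_pdivlMr; last by rewrite mulr_gt0.
  have q2 : Num.sqrt (y i) ^+ 2 = y i by rewrite sqr_sqrtr.
  have : 0 <= (Num.sqrt (y i) - s) ^+ 2 by rewrite sqr_ge0.
  nra.
apply: le_trans (ler_sum _ (fun i _ => step i)) _.
have -> : \sum_i p i * ((y i + m) / (2 * s)) = (m + (\sum_i p i) * m) / (2 * s).
  rewrite (eq_bigr (fun i => (p i * y i + p i * m) / (2 * s))); last first.
    by move=> i _; rewrite mulrA mulrDr.
  by rewrite -mulr_suml big_split /= -/m -mulr_suml.
rewrite p1 mul1r -s2 le_eqVlt; apply/orP; left; apply/eqP. field.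
by rewrite gt_eqF.
Qed.
Definition bprob (R : realType) (I : finType) (mu : I -> R) (om : {ffun I -> bool}) : R :=
  \prod_i (if om i then mu i else 1 - mu i).

Definition Ex (R : realType) (I : finType) (mu : I -> R) (f : {ffun I -> bool} -> R) : R :=
  \sum_om bprob mu om * f om.

Lemma ExD (R : realType) (I : finType) (mu : I -> R) f g :
  Ex mu (fun om => f om + g om) = Ex mu f + Ex mu g.
Proof. by rewrite /Ex -big_split; apply: eq_bigr => om _; rewrite mulrDr. Qed.

Lemma ExZ (R : realType) (I : finType) (mu : I -> R) c f :
  Ex mu (fun om => c * f om) = c * Ex mu f.
Proof. by rewrite /Ex mulr_sumr; apply: eq_bigr => om _; rewrite mulrCA. Qed.

Lemma ExS (R : realType) (I J : finType) (mu : I -> R) (F : J -> {ffun I -> bool} -> R) :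
  Ex mu (fun om => \sum_j F j om) = \sum_j Ex mu (F j).
Proof.
rewrite /Ex exchange_big; apply: eq_bigr => om _ /=; by rewrite mulr_sumr.
Qed.

Lemma Exprod (R : realType) (I : finType) (mu : I -> R) (h : I -> bool -> R) :
  Ex mu (fun om => \prod_i h i (om i)) = \prod_i (mu i * h i true + (1 - mu i) * h i false).
Proof.
rewrite (eq_bigr (fun i => \sum_(j : bool) (if j then mu i else 1 - mu i) * h i j)); last first.
  by move=> i _; rewrite big_bool.
rewrite bigA_distr_bigA /Ex; apply: eq_bigr => f _.
by rewrite /bprob -big_split.
Qed.

Lemma Ex1 (R : realType) (I : finType) (mu : I -> R) : Ex mu (fun _ => 1) = 1.
Proof.
transitivity (Ex mu (fun om => \prod_i (fun (_ : I) (_ : bool) => (1 : R)) i (om i))).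
  by rewrite /Ex; apply: eq_bigr => om _; rewrite big1_eq.
apply: etrans (Exprod mu (fun (_ : I) (_ : bool) => (1 : R))) _.
rewrite big1 // => i _ /=; rewrite !mulr1 addrC subrK //.
Qed.

Lemma Exom (R : realType) (I : finType) (mu : I -> R) a :
  Ex mu (fun om => (om a)%:R) = mu a.
Proof.
transitivity (Ex mu (fun om => \prod_i (fun i (j : bool) => if i == a then (j : nat)%:R else (1 : R)) i (om i))).
  rewrite /Ex; apply: eq_bigr => om _.
  rewrite (bigD1 a) //= ?eqxx big1 ?mulr1 // => i /negbTE -> //.
apply: etrans (Exprod mu (fun i (j : bool) => if i == a then (j : nat)%:R else (1 : R))) _.
rewrite (bigD1 a) //= ?eqxx mulr1 mulr0 addr0 big1 ?mulr1 //.
by move=> i /negbTE ->; rewrite !mulr1 addrC subrK.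
Qed.

Lemma Exom2 (R : realType) (I : finType) (mu : I -> R) a b :
  Ex mu (fun om => (om a)%:R * (om b)%:R) = mu a * mu b + (a == b)%:R * (mu a - mu a ^+ 2).
Proof.
have [ab|ab] := eqVneq a b.
  rewrite -ab mul1r.
  have -> : Ex mu (fun om => (om a)%:R * (om a)%:R) = Ex mu (fun om => (om a)%:R).
    by rewrite /Ex; apply: eq_bigr => om _; case: (om a); rewrite ?mulr1 ?mulr0.
  rewrite Exom; ring.
transitivity (Ex mu (fun om => \prod_i (fun i (j : bool) => if (i == a) || (i == b) then (j : nat)%:R else (1 : R)) i (om i))).
  rewrite /Ex; apply: eq_bigr => om _.
  rewrite (bigD1 a) //= (bigD1 b) /=; last by rewrite eq_sym.
  rewrite big1 ?mulr1; first by rewrite /= !eqxx ?orbT.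
  by move=> i /andP [ib ia]; rewrite (negbTE ia) (negbTE ib).
apply: etrans (Exprod mu (fun i (j : bool) => if (i == a) || (i == b) then (j : nat)%:R else (1 : R))) _.
rewrite (bigD1 a) //= (bigD1 b) /=; last by rewrite eq_sym.
rewrite big1; last first.
  by move=> i /andP [ib ia]; rewrite (negbTE ia) (negbTE ib) !mulr1 addrC subrK.
rewrite /= !eqxx ?orbT (negbTE ab) /=; ring.
Qed.
Lemma Esq (R : realType) (I : finType) (mu u : I -> R) (beta : R) :
  Ex mu (fun om => (\sum_i u i * (om i)%:R + beta) ^+ 2) =
  (\sum_i u i * mu i + beta) ^+ 2 + \sum_i u i ^+ 2 * (mu i - mu i ^+ 2).
Proof.
transitivity (Ex mu (fun om => \sum_a \sum_b (u a * u b) * ((om a)%:R * (om b)%:R)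
   + (2 * beta) * (\sum_a u a * (om a)%:R) + beta ^+ 2 * 1)).
  rewrite /Ex; apply: eq_bigr => om _; congr (_ * _).
  set S := \sum_a u a * (om a)%:R.
  have -> : \sum_a \sum_b (u a * u b) * ((om a)%:R * (om b)%:R) = S * S.
    rewrite /S mulr_suml; apply: eq_bigr => a _; rewrite mulr_sumr.
    by apply: eq_bigr => b _; ring.
  ring.
rewrite ExD ExD ExZ ExZ Ex1 ExS.
under eq_bigr do rewrite ExS.
under eq_bigr do under eq_bigr do rewrite ExZ Exom2.
rewrite ExS.
under [X in 2 * beta * X]eq_bigr do rewrite ExZ Exom.
have -> : \sum_a \sum_b u a * u b * (mu a * mu b + (a == b)%:R * (mu a - mu a ^+ 2))
   = (\sum_a u a * mu a) ^+ 2 + \sum_a u a ^+ 2 * (mu a - mu a ^+ 2).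
  rewrite expr2 mulr_suml -big_split /=; apply: eq_bigr => a _.
  rewrite mulr_sumr (eq_bigr (fun b => u a * u b * (mu a * mu b) + (if b == a then u a ^+ 2 * (mu a - mu a ^+ 2) else 0))); last first.
    move=> b _; rewrite eq_sym; case: eqVneq => [->|_]; first by rewrite /= mul1r; ring.
    by rewrite /= mul0r !addr0.
  rewrite big_split /= -big_mkcond /= big_pred1_eq; congr (_ + _).
  by apply: eq_bigr => b _; ring.
ring.
Qed.
Lemma inner_outer1 (R : realType) n (x y t : 'cV[R]_n) :
  inner x ((y *m y^T) *m t) = inner x y * inner y t.
Proof. by have := inner_outer 1%:M x y t; rewrite !mul1mx. Qed.

Lemma inner_eq0 (R : realType) n (z : 'cV[R]_n) : inner z z = 0 -> z = 0.
Proof.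
rewrite innerE => h; apply/matrixP => i j; rewrite (ord1 j) mxE.
have h0 : forall i, predT i -> 0 <= z i 0 * z i 0 by move=> k _; rewrite -expr2 sqr_ge0.
have := @psumr_eq0P _ _ predT (fun i => z i 0 * z i 0) h0 h i isT.
by move/eqP; rewrite mulf_eq0 orbb => /eqP.
Qed.

Lemma pd_unit (R : realType) n (V : 'M[R]_n) (l : R) : 0 < l -> V^T = V ->
  (forall z, l * inner z z <= inner z (V *m z)) -> V \in unitmx.
Proof.
move=> lp sV h; rewrite unitmxE unitfE; apply/negP => /det0P [v vn0 vV].
have Vz : V *m v^T = 0 by rewrite -sV -trmx_mul vV trmx0.
have := h v^T; rewrite Vz.
have -> : inner v^T 0 = 0 by rewrite innerE big1 // => i _; rewrite !mxE mulr0.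
have ip : 0 < inner v^T v^T.
  rewrite lt0r inner_ge0 andbT; apply/negP => /eqP /inner_eq0 /eqP.
  by rewrite -trmx0 (inj_eq (@trmx_inj _ _ _)) (negbTE vn0).
by move=> hh; have := mulr_gt0 lp ip; rewrite ltNge hh.
Qed.

Lemma le_bigmaxR (R : realType) n (F : 'I_n -> R) i : F i <= \big[Order.max/0]_(j < n) F j.
Proof. by rewrite (bigD1 i) //= le_max lexx. Qed.
Theorem lemma1 :
  forall (R : realType) (lambda c c' : R), 0 < lambda -> 0 <= c -> 0 <= c' ->
  exists (C : R) (p : nat), 0 < C /\
  forall (d M k T : nat) (X : 'I_M -> 'cV[R]_d) (theta : 'cV[R]_d)
         (w : 'I_M -> R) (sched : 'I_T -> 'I_k -> 'I_M),
    injective X ->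
    row_full (\matrix_(i < M) (X i)^T) ->
    (forall i, norm2 (X i) <= c) ->
    norm2 theta <= c' ->
    (forall i, 0 <= inner (X i) theta <= 1) ->
    (1 <= k <= M)%N ->
    (0 < T)%N ->
    is_fstar_minimizer k X w ->
    (forall t, injective (sched t)) ->
    (forall i, (#|[set tr : 'I_T * 'I_k | sched tr.1 tr.2 == i]|)%:R = (k * T)%:R * w i) ->
    rmse lambda X theta sched
      <= C * (ln ((d + k * T)%:R + 3)) ^+ p * Num.sqrt (design_obj X w / (k * T)%:R).
Proof.
move=> R lambda c c' lp c0 c'0.
set K := lambda * c' ^+ 2 + 1.
have Kp : 0 < K by rewrite /K; have := sqr_ge0 c'; nra.
exists (Num.sqrt K), 0%N; split; first by rewrite sqrtr_gt0.
move=> d M k T X theta w sched _ _ _ hth hmu hk hT hmin _ hcount.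
rewrite expr0 mulr1.
have Np : 0 < (k * T)%:R :> R by rewrite ltr0n muln_gt0 hT; case/andP: hk => ->.
set Nr := (k * T)%:R : R.
have M0 : (0 < M)%N by case/andP: hk; apply: leq_trans.
set Xs := fun tr : 'I_T * 'I_k => X (sched tr.1 tr.2).
set G := \sum_(tr : 'I_T * 'I_k) Xs tr *m (Xs tr)^T.
set V := gram lambda X sched.
have VE : V = lambda%:M + G by [].
case: hmin => _ uD hmin.
set D := design X w.
have GE : G = Nr *: D.
  rewrite /G (partition_big (fun tr => sched tr.1 tr.2) predT) //=.
  rewrite /D /design scaler_sumr; apply: eq_bigr => j _.
  rewrite (eq_bigr (fun _ => X j *m (X j)^T)); last by move=> tr /eqP <-.
  rewrite (eq_bigl (fun tr => tr \in [set tr : 'I_T * 'I_k | sched tr.1 tr.2 == j])); last first.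
    by move=> tr; rewrite inE.
  by rewrite sumr_const -scaler_nat hcount scalerA.
have sG : G^T = G.
  by rewrite /G raddf_sum; apply: eq_bigr => tr _ /=; rewrite trmx_mul trmxK.
have sV : V^T = V by rewrite VE raddfD /= tr_scalar_mx sG.
have qGE : forall z, inner z (G *m z) = \sum_tr inner z (Xs tr) ^+ 2.
  move=> z; rewrite /G mulmx_suml innerSr; apply: eq_bigr => tr _.
  by rewrite inner_outer1 expr2 (innerC (Xs tr)).
have psdG : forall z, 0 <= inner z (G *m z).
  by move=> z; rewrite qGE sumr_ge0 // => tr _; rewrite sqr_ge0.
have qVE : forall z, inner z (V *m z) = lambda * inner z z + inner z (G *m z).
  by move=> z; rewrite VE mulmxDl mul_scalar_mx innerDr innerZr.
have uV : V \in unitmx.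
  apply: (pd_unit lp sV) => z; rewrite qVE; have := psdG z; lra.
have uG : G \in unitmx by rewrite GE unitmxZ // unitfE gt_eqF.
set iV := invmx V.
have siV : iV^T = iV by rewrite /iV trmx_inv sV.
have VK : forall z : 'cV[R]_d, V *m (iV *m z) = z by move=> z; apply: (mulKVmx uV).
have psdV : forall z, 0 <= inner z (V *m z).
  move=> z; rewrite qVE; have := psdG z; have := inner_ge0 z; nra.
have psdiV : forall z, 0 <= inner z (iV *m z).
  move=> z; rewrite -{1}(VK z) innerC; exact: psdV.
have leGV : forall z, inner z (G *m z) <= inner z (V *m z).
  move=> z; rewrite qVE; have := inner_ge0 z; nra.
have fi : forall x, inner x (iV *m x) <= Nr^-1 * inner x (invmx D *m x).
  move=> x; apply: le_trans (qvar x uV uG sG psdG leGV) _.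
  have uD' : Nr *: D \in unitmx by rewrite -GE.
  by rewrite GE (invmxZ uD') -scalemxAl innerZr.
have fstar : forall i, inner (X i) (invmx D *m X i) <= design_obj X w.
  by move=> i; rewrite /design_obj; apply: (le_bigmaxR (fun j => inner (X j) (invmx D *m X j))).
have qi : forall i, inner (X i) (iV *m X i) <= design_obj X w / Nr.
  move=> i; apply: le_trans (fi _) _; rewrite mulrC ler_wpM2r // ?invr_ge0 ?ltW //.
have uL : (lambda%:M : 'M[R]_d) \in unitmx.
  by rewrite -scalemx1 unitmxZ ?unitmx1 // unitfE gt_eqF.
have qth : inner theta (iV *m theta) <= lambda^-1 * inner theta theta.
  have := @qvar _ _ V (lambda%:M) theta uV uL (tr_scalar_mx _ _).
  rewrite invmx_scalar mul_scalar_mx innerZr; apply.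
    by move=> z; rewrite mul_scalar_mx innerZr; have := inner_ge0 z; nra.
  by move=> z; rewrite mul_scalar_mx innerZr qVE; have := psdG z; lra.
have tt : inner theta theta <= c' ^+ 2.
  move: hth; rewrite /norm2 => hs.
  have s0 := sqrtr_ge0 (inner theta theta).
  have := sqr_sqrtr (inner_ge0 theta) => <-; nra.
set mu := fun tr : 'I_T * 'I_k => inner (Xs tr) theta.
have mu01 : forall tr, 0 <= mu tr <= 1 by move=> tr; exact: hmu.
set fs := design_obj X w.
have hEi : forall i, Ex mu (fun om => inner (X i) (ridge lambda X sched om - theta) ^+ 2)
    <= K * (fs / Nr).
  move=> i; set x := X i.
  set u := fun tr => inner x (iV *m Xs tr).
  have eE : forall om, inner x (ridge lambda X sched om - theta)
      = \sum_tr u tr * (om tr)%:R + (- inner x theta).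
    move=> om; rewrite innerBr /ridge -/V -/iV mulmx_sumr innerSr; congr (_ - _).
    by apply: eq_bigr => tr _; rewrite -scalemxAr innerZr mulrC.
  have -> : Ex mu (fun om => inner x (ridge lambda X sched om - theta) ^+ 2)
      = Ex mu (fun om => (\sum_tr u tr * (om tr)%:R + (- inner x theta)) ^+ 2).
    by rewrite /Ex; apply: eq_bigr => om _; rewrite eE.
  rewrite Esq.
  have s1 : \sum_tr u tr * mu tr = inner x (iV *m (G *m theta)).
    rewrite /G mulmx_suml mulmx_sumr innerSr; apply: eq_bigr => tr _.
    by rewrite mulmxA inner_outer.
  have s2 : iV *m (G *m theta) = theta - lambda *: (iV *m theta).
    have -> : G *m theta = V *m theta - lambda *: theta.
      by rewrite VE mulmxDl mul_scalar_mx addrC addKr.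
    by rewrite mulmxBr mulmxA /iV (mulVmx uV) mul1mx scalemxAr.
  rewrite s1 s2 innerBr innerZr.
  set a := inner x (iV *m x).
  set b := inner x (iV *m theta).
  have cs : b ^+ 2 <= a * inner theta (iV *m theta) by apply: cs_form.
  have va : \sum_tr u tr ^+ 2 * (mu tr - mu tr ^+ 2) <= a.
    apply: le_trans (_ : \sum_tr u tr ^+ 2 <= a).
      apply: ler_sum => tr _; have := mu01 tr; have := sqr_ge0 (u tr); nra.
    set y := iV *m x.
    have -> : \sum_tr u tr ^+ 2 = inner y (G *m y).
      rewrite qGE; apply: eq_bigr => tr _; rewrite /u innerMr siV.
      by rewrite innerC.
    have : inner y (V *m y) = a by rewrite VK innerC.
    have := inner_ge0 y; rewrite qVE; nra.
  have a0 : 0 <= a by apply: psdiV.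
  have li : lambda * lambda^-1 = 1 by rewrite mulfV // gt_eqF.
  have li0 : 0 <= lambda^-1 by rewrite invr_ge0 ltW.
  have h1 : b ^+ 2 <= a * (lambda^-1 * c' ^+ 2).
    apply: le_trans cs _; apply: ler_wpM2l => //.
    apply: le_trans qth _; apply: ler_wpM2l => //.
  have h2 : (inner x theta - lambda * b + - inner x theta) ^+ 2 = lambda ^+ 2 * b ^+ 2 by ring.
  rewrite h2.
  have h3 : lambda ^+ 2 * b ^+ 2 <= lambda * c' ^+ 2 * a.
    have := ler_wpM2l (ltW (mulr_gt0 lp lp)) h1.
    have -> : lambda * lambda * (a * (lambda^-1 * c' ^+ 2)) = lambda * c' ^+ 2 * a * (lambda * lambda^-1) by ring.
    by rewrite li mulr1 expr2.
  have h4 : a <= fs / Nr by apply: qi.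
  have h5 : 0 <= (lambda * c' ^+ 2 + 1) * (fs / Nr - a).
    by apply: mulr_ge0; [have := sqr_ge0 c'; nra | lra].
  rewrite /K; lra.
have i0 : 'I_M := Ordinal M0.
have fs0 : 0 <= fs / Nr by apply: le_trans (qi i0); apply: psdiV.
set Y := fun om : {ffun 'I_T * 'I_k -> bool} =>
  M%:R^-1 * \sum_(i < M) inner (X i) (ridge lambda X sched om - theta) ^+ 2.
have -> : rmse lambda X theta sched = \sum_om bprob mu om * Num.sqrt (Y om) by [].
have p0 : forall om, 0 <= bprob mu om.
  move=> om; apply: prodr_ge0 => tr _; have := mu01 tr; case: (om tr) => /andP [h1 h2] //.
  by rewrite subr_ge0.
have p1 : \sum_om bprob mu om = 1.
  by rewrite -(Ex1 mu) /Ex; apply: eq_bigr => om _; rewrite mulr1.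
have Y0 : forall om, 0 <= Y om.
  move=> om; apply: mulr_ge0; first by rewrite invr_ge0 ler0n.
  by apply: sumr_ge0 => i _; rewrite sqr_ge0.
apply: le_trans (jensen_sqrt p0 p1 Y0) _.
rewrite -sqrtrM; last exact: ltW.
rewrite ler_sqrt; last by rewrite mulr_ge0 // ltW.
have -> : \sum_om bprob mu om * Y om = Ex mu Y by [].
rewrite /Y ExZ ExS.
apply: le_trans (_ : M%:R^-1 * \sum_(i < M) (K * (fs / Nr)) <= _).
  apply: ler_wpM2l; first by rewrite invr_ge0 ler0n.
  by apply: ler_sum => i _; apply: hEi.
rewrite sumr_const card_ord -(mulr_natl (K * (fs / Nr)) M) !mulrA mulVf ?mul1r //.
by rewrite pnatr_eq0 -lt0n.
Qed.
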